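(* Let $(X,\pi)$ be a finite symmetric two-player game with relative payoff game $(X,\Delta)$. If $(X,\Delta)$ has no pure saddle point, then imitation is subject to a money pump.
   Context: A symmetric two-player game $(X,\pi)$ has common action set $X$ and payoff $\pi:X\times X\to\mathbb{R}$ ($\pi(x,y)$ = payoff of the player choosing $x$ against $y$). Relative payoff: $\Delta(x,y)=\pi(x,y)-\pi(y,x)$; $(X,\Delta)$ is a zero-sum game where player 1 choosing $x$ against $y$ gets $\Delta(x,y)$. A pure saddle point is $(x^*,y^* )$ with $\Delta(x,y^* )\le\Delta(x^*,y^* )\le\Delta(x^*,y)$ for all $x,y\in X$. Imitate-the-best: given initial $y_0\in X$ and any opponent sequence $(x_t)_{t\ge0}$, $y_t=x_{t-1}$ if $\Delta(x_{t-1},y_{t-1})>0$ and $y_t=y_{t-1}$ otherwise. Imitation is not subject to a money pump if there is $M\in\mathbb{R}_+$ such that for every $y_0\in X$ and every sequence $(x_t)$, $\limsup_{T\to\infty}\sum_{t=0}^T\Delta(x_t,y_t)\le M$; otherwise it is subject to a money pump. *)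

(* Defs.v *)
From HB Require Import structures.
From mathcomp Require Import all_boot all_order all_algebra.
From mathcomp Require Import all_classical all_reals all_analysis.
Set Implicit Arguments. Unset Strict Implicit. Unset Printing Implicit Defensive.
Import Order.TTheory GRing.Theory Num.Theory.
Local Open Scope ring_scope.

Definition rel_payoff {R : realType} {X : Type} (pi : X -> X -> R) (x y : X) : R :=
  pi x y - pi y x.

Definition pure_saddle_point {R : realType} {X : Type} (pi : X -> X -> R) (xs ys : X) : Prop :=
  forall x y : X, rel_payoff pi x ys <= rel_payoff pi xs ys /\
                  rel_payoff pi xs ys <= rel_payoff pi xs y.

Fixpoint imitate {R : realType} {X : Type} (pi : X -> X -> R) (y0 : X) (xs : nat -> X) (t : nat) : X :=
  match t with
  | 0 => y0
  | t'.+1 => let y := imitate pi y0 xs t' in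
             if 0 < rel_payoff pi (xs t') y then xs t' else y
  end.

Definition pump_sum {R : realType} {X : Type} (pi : X -> X -> R) (y0 : X) (xs : nat -> X) (T : nat) : R :=
  \sum_(0 <= t < T.+1) rel_payoff pi (xs t) (imitate pi y0 xs t).

Definition no_money_pump {R : realType} {X : Type} (pi : X -> X -> R) : Prop :=
  exists M : R, 0 <= M /\
    forall (y0 : X) (xs : nat -> X),
      (limn_esup (fun T => (pump_sum pi y0 xs T)%:E) <= M%:E)%E.

Definition money_pump {R : realType} {X : Type} (pi : X -> X -> R) : Prop :=
  ~ no_money_pump pi.

(* Main.v *)
Require Import Defs.
From HB Require Import structures.
From mathcomp Require Import all_boot all_order all_algebra.
From mathcomp Require Import all_classical all_reals all_analysis.
Import Order.TTheory GRing.Theory Num.Theory.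
Local Open Scope ring_scope.

Theorem proposition1 (R : realType) (X : finType) (x0 : X) (pi : X -> X -> R) :
  ~ (exists xs ys : X, pure_saddle_point pi xs ys) -> money_pump pi.
Proof.
move=> nsp.

have Dxx x : rel_payoff pi x x = 0 by rewrite /rel_payoff subrr.
have DN x y : rel_payoff pi x y = - rel_payoff pi y x by rewrite /rel_payoff opprB.
have beat : forall y, exists x, 0 < rel_payoff pi x y.
  move=> y; apply/not_existsP => hy; apply: nsp; exists y, y => x z.
  rewrite Dxx; split.
    by rewrite leNgt; apply/negP => h; apply: (hy x).
  by rewrite DN oppr_ge0 leNgt; apply/negP => h; apply: (hy z).
pose b y := odflt y [pick x | 0 < rel_payoff pi x y].
have bP y : 0 < rel_payoff pi (b y) y.
  rewrite /b; case: pickP => [x //|h]; case: (beat y) => x hx.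
  by move: (h x); rewrite hx.
pose f y := rel_payoff pi (b y) y.
pose ym := Order.arg_min x0 xpredT f.
have epsmin y : f ym <= f y by rewrite /ym; case: Order.TotalTheory.arg_minP => // i _ ; apply.
set eps := f ym.
have eps0 : 0 < eps by apply: bP.
move=> [M [M0 HM]].
pose ys t := iter t b x0.
pose xs t := b (ys t).
have Hys t : imitate pi x0 xs t = ys t.
  elim: t => [//|t IH] /=; rewrite IH.
  by rewrite (_ : 0 < rel_payoff pi (xs t) (ys t)) //; apply: bP.
have Hu T : (T.+1%:R * eps <= pump_sum pi x0 xs T).
  rewrite /pump_sum big_mkord.
  have -> : T.+1%:R * eps = \sum_(i < T.+1) eps.
    by rewrite sumr_const card_ord mulr_natl.
  apply: ler_sum => i _.
  by rewrite Hys; apply: epsmin.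
have := HM x0 xs.
pose N := Num.truncn (M / eps).
have HN : M < N.+1%:R * eps.
  by rewrite -ltr_pdivrMr // truncnS_gt.
clearbody N.
apply/negP; rewrite -ltNge; apply: (@lt_le_trans _ _ (N.+1%:R * eps)%:E).
  by rewrite lte_fin.
rewrite limn_esup_lim; apply: lime_ge; first exact: is_cvg_esups.
near=> n.
apply: (@le_trans _ _ (pump_sum pi x0 xs n)%:E); last first.
  by apply/ereal_sup_ubound; exists n => /=.
rewrite lee_fin; apply: le_trans (Hu n).
rewrite ler_pM2r // ler_nat ltnS.
near: n; by exists N.
Unshelve. all: by end_near.
Qed.
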